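(* Let $S\in\mathbb{S}^d_m$, $G\in\mathcal{M}(S)$ and $y\in\mathbb{R}^d$ with $P_G(y)\ne\emptyset$. Then $P_G(y)$ is a convex set if and only if $S(u-v,u-v)=0$ for all $u,v\in P_G(y)$. Consequently, $\Sigma_0(P_G)=\{y\in\Sigma(P_G): P_G(y)\text{ is convex}\}$.
   Context: $\mathbb{S}^d_m$: symmetric invertible $d\times d$ real matrices with exactly $m$ positive eigenvalues; $S(x,y):=\langle x,Sy\rangle$. $G\subset\mathbb{R}^d$ is $S$-monotone if $S(x-y,x-y)\ge0$ for $x,y\in G$; maximal if not a strict subset of another $S$-monotone set; $\mathcal{M}(S)$ is the family of maximal $S$-monotone sets. $P_G(y):=\operatorname{argmax}_{x\in G}(S(x,y)-\frac12S(x,x))$. $\Sigma(P_G):=\{y:P_G(y)\ne\emptyset\text{ and is not a single point}\}$; $\Sigma_0(P_G):=\{y\in\Sigma(P_G):S(y_1-y_2,y_1-y_2)=0\text{ for all }y_1,y_2\in P_G(y)\}$. *)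

(* Defs.v *)
From mathcomp Require Import all_boot all_order all_algebra.
From mathcomp Require Import reals.
Set Implicit Arguments. Unset Strict Implicit. Unset Printing Implicit Defensive.
Import Order.TTheory GRing.Theory Num.Theory.
Local Open Scope ring_scope.

Definition Sform (R : realType) (d : nat) (S : 'M[R]_d) (x y : 'cV[R]_d) : R :=
  (x^T *m S *m y) 0 0.

(* S in S^d_m : symmetric, invertible, with exactly m positive eigenvalues
   counted with multiplicity (the eigenvalues of a real symmetric matrix are
   real: the characteristic polynomial splits over R as prod (X - lambda_i)). *)
Definition in_Sdm (R : realType) (d m : nat) (S : 'M[R]_d) : Prop :=
  S^T = S /\ S \in unitmx /\
  exists2 ev : d.-tuple R,
    char_poly S = \prod_(l <- ev) ('X - l%:P)
    & count (fun l => 0 < l) ev = m.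

Definition S_monotone (R : realType) (d : nat) (S : 'M[R]_d)
    (G : 'cV[R]_d -> Prop) : Prop :=
  forall x y, G x -> G y -> 0 <= Sform S (x - y) (x - y).

Definition maximal_S_monotone (R : realType) (d : nat) (S : 'M[R]_d)
    (G : 'cV[R]_d -> Prop) : Prop :=
  S_monotone S G /\
  forall G' : 'cV[R]_d -> Prop, S_monotone S G' ->
    (forall x, G x -> G' x) -> forall x, G' x -> G x.

Definition PG (R : realType) (d : nat) (S : 'M[R]_d) (G : 'cV[R]_d -> Prop)
    (y : 'cV[R]_d) (x : 'cV[R]_d) : Prop :=
  G x /\ forall z, G z ->
    Sform S z y - 2^-1 * Sform S z z <= Sform S x y - 2^-1 * Sform S x x.

Definition nonempty (R : realType) (d : nat) (A : 'cV[R]_d -> Prop) : Prop :=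
  exists x, A x.

Definition convex (R : realType) (d : nat) (A : 'cV[R]_d -> Prop) : Prop :=
  forall u v (t : R), A u -> A v -> 0 <= t -> t <= 1 ->
    A (t *: u + (1 - t) *: v).

Definition Sigma (R : realType) (d : nat) (S : 'M[R]_d) (G : 'cV[R]_d -> Prop)
    (y : 'cV[R]_d) : Prop :=
  nonempty (PG S G y) /\ ~ (exists x, forall z, PG S G y z <-> z = x).

Definition Sigma0 (R : realType) (d : nat) (S : 'M[R]_d) (G : 'cV[R]_d -> Prop)
    (y : 'cV[R]_d) : Prop :=
  Sigma S G y /\
  forall y1 y2, PG S G y y1 -> PG S G y y2 -> Sform S (y1 - y2) (y1 - y2) = 0.

(* Main.v *)
Require Import Defs.
From mathcomp Require Import all_boot all_order all_algebra.
From mathcomp Require Import reals.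
From mathcomp Require Import ring lra.
Import Order.TTheory GRing.Theory Num.Theory.
Set Implicit Arguments.
Local Open Scope ring_scope.

Section L.
Section L.
Variables (R : realType) (d : nat) (S : 'M[R]_d).
Lemma SformDl x1 x2 y : Sform S (x1+x2) y = Sform S x1 y + Sform S x2 y.
Proof. by rewrite /Sform linearD /= !mulmxDl mxE. Qed.
Lemma SformZl a x y : Sform S (a*:x) y = a * Sform S x y.
Proof. by rewrite /Sform linearZ /= -!scalemxAl mxE. Qed.
Lemma SformDr x y1 y2 : Sform S x (y1+y2) = Sform S x y1 + Sform S x y2.
Proof. by rewrite /Sform !mulmxDr mxE. Qed.
Lemma SformZr a x y : Sform S x (a*:y) = a * Sform S x y.
Proof. by rewrite /Sform -!scalemxAr mxE. Qed.
Lemma SformC x y : S^T = S -> Sform S x y = Sform S y x.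
Proof.
move=> HS; have E (A : 'M[R]_1) : A 0 0 = A^T 0 0 by rewrite mxE.
by rewrite /Sform E !trmx_mul trmxK HS mulmxA.
Qed.
Hypothesis HS : S^T = S.
Let q x := Sform S x x.
Lemma Sq2 s r a b : Sform S (s*:a + r*:b) (s*:a+r*:b) =
  s^+2 * q a + 2 * s * r * Sform S a b + r^+2 * q b.
Proof.
rewrite /q !(SformDl, SformDr, SformZl, SformZr) (SformC b a HS); rewrite /q; ring.
Qed.
Lemma qsub a b : q (a - b) = q a - 2 * Sform S a b + q b.
Proof.
have -> : a - b = 1 *: a + (-1) *: b by rewrite scale1r scaleN1r.
rewrite /q Sq2 /q; ring.
Qed.
Lemma comb_eq (t : R) (u v g : 'cV[R]_d) :
  t *: u + (1 - t) *: v - g = t *: (u - g) + (1 - t) *: (v - g).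
Proof.
by rewrite !scalerBr addrACA -opprD -scalerDl addrCA subrr addr0 scale1r.
Qed.
Lemma qcomb (t : R) (u v g : 'cV[R]_d) :
  q (t *: u + (1 - t) *: v - g) = t * q (u - g) + (1 - t) * q (v - g) - t * (1 - t) * q (u - v).
Proof.
have -> : u - v = (u - g) - (v - g) by rewrite opprB addrA subrK.
rewrite comb_eq; set a := u - g; set b := v - g; rewrite [q (a - b)]qsub /q Sq2 /q; ring.
Qed.
Lemma fcomb (t : R) (u v y : 'cV[R]_d) :
  let f x := Sform S x y - 2^-1 * q x in
  f (t *: u + (1 - t) *: v) = t * f u + (1 - t) * f v + 2^-1 * t * (1 - t) * q (u - v).
Proof.
move=> f; rewrite /f qsub [q (_ + _)]/q Sq2 SformDl !SformZl /q; ring.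
Qed.
Lemma qN (a b : 'cV[R]_d) : q (a - b) = q (b - a).
Proof. rewrite !qsub (SformC a b HS); ring. Qed.
Lemma q0 (a : 'cV[R]_d) : q (a - a) = 0.
Proof. rewrite qsub /q; ring. Qed.
End L.
End L.

Theorem lemma3 (R : realType) (d m : nat) (S : 'M[R]_d)
    (G : 'cV[R]_d -> Prop) :
  in_Sdm m S -> maximal_S_monotone S G ->
  (forall y : 'cV[R]_d, nonempty (PG S G y) ->
     (convex (PG S G y) <->
      forall u v, PG S G y u -> PG S G y v -> Sform S (u - v) (u - v) = 0)) /\
  (forall y : 'cV[R]_d, Sigma0 S G y <-> (Sigma S G y /\ convex (PG S G y))).
Proof.
move=> [HS _] [Gmon Gmax].
have part1 : forall y : 'cV[R]_d, nonempty (PG S G y) ->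
     (convex (PG S G y) <->
      forall u v, PG S G y u -> PG S G y v -> Sform S (u - v) (u - v) = 0).
  move=> y _; split.
  - move=> Hc u v Pu Pv.
    have h2 : (0:R) <= 2^-1 by rewrite invr_ge0.
    have h2' : (2^-1:R) <= 1 by rewrite invf_le1 // ler1n.
    have Pw := Hc u v 2^-1 Pu Pv h2 h2'.
    have e := @fcomb _ _ _ HS (2^-1) u v y; rewrite /= in e.
    have a1 := Pu.2 _ Pw.1. have a2 := Pu.2 _ Pv.1. have a3 := Pv.2 _ Pu.1.
    have a4 := Gmon _ _ Pu.1 Pv.1.
    lra.
  - move=> H0 u v t Pu Pv t0 t1.
    set w := t *: u + (1 - t) *: v.
    have quv := H0 u v Pu Pv.
    have Gw : G w.
      apply: (Gmax (fun x => G x \/ x = w)); last by right.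
        move=> x z [Gx|->] [Gz|->].
        - exact: Gmon.
        - rewrite (@qN _ _ _ HS); have := @qcomb _ _ _ HS t u v x; rewrite /= => ->.
          rewrite quv; have := Gmon _ _ Pu.1 Gx; have := Gmon _ _ Pv.1 Gx; nra.
        - have := @qcomb _ _ _ HS t u v z; rewrite /= => ->.
          rewrite quv; have := Gmon _ _ Pu.1 Gz; have := Gmon _ _ Pv.1 Gz; nra.
        - by rewrite (@q0 _ _ _ HS).
      by move=> x Gx; left.
    split => // z Gz.
    have e := @fcomb _ _ _ HS t u v y; rewrite /= quv in e.
    rewrite e.
    have a1 := Pu.2 _ Gz. have a2 := Pu.2 _ Pv.1. have a3 := Pv.2 _ Pu.1.
    nra.
split => // y; split.
- move=> [Hs H0]; split => //; apply/(part1 y Hs.1); exact: H0.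
- move=> [Hs Hc]; split => //; apply/(part1 y Hs.1); exact: Hc.
Qed.
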